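(* Let $k:\mathbb{R}\to\mathbb{R}$ be a nonnegative kernel that is symmetric, i.e. $k(-z)=k(z)$ for all $z$, with $E(k(\epsilon_1))<\infty$ and $E(|\epsilon_1|^2 k^r(\epsilon_1))<\infty$ for $r=1,2$. Let $n\ge 2$, $m\in\mathbb{R}$, and let $Y_i=m+\epsilon_i$, $i=1,\dots,n$, where $\epsilon_1,\dots,\epsilon_n$ are i.i.d., symmetrically distributed around $0$ (i.e. $\epsilon_1\stackrel{d}{=}-\epsilon_1$) with finite second moment. For $i=1,\dots,n$ define the vertically weighted average \[ \widehat{\mu}_n(Y_i)=\frac{\sum_{j\ne i} Y_j\,k(Y_j-Y_i)}{\sum_{j\ne i} k(Y_j-Y_i)}, \] the sums running over $j\in\{1,\dots,n\}\setminus\{i\}$. Then $\mathrm{Med}(\widehat{\mu}_n(Y_i))=m$ for every $i=1,\dots,n$.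
   Context: $\mathrm{Med}$ denotes the median of a random variable; $\stackrel{d}{=}$ denotes equality in distribution. In particular $\widehat{\mu}_n(Y_n)=\sum_{j\le n-1}Y_j k(Y_j-Y_n)/\sum_{j\le n-1}k(Y_j-Y_n)$. *)

(* Defs.v *)
From HB Require Import structures.
From mathcomp Require Import all_boot all_order all_algebra.
From mathcomp Require Import all_classical all_reals all_analysis.
Set Implicit Arguments. Unset Strict Implicit. Unset Printing Implicit Defensive.
Import Order.TTheory GRing.Theory Num.Theory.
Local Open Scope classical_set_scope.
Local Open Scope ring_scope.

Section Defs.
Context {d : measure_display} {T : measurableType d} {R : realType}.

(* Mutual independence of X_0, ..., X_(n-1): product rule for every family of
   Borel sets (taking B i = setT recovers every subfamily). *)
Definition mutually_independent (P : probability T R) (n : nat)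
    (X : nat -> T -> R) : Prop :=
  forall B : nat -> set R, (forall i, measurable (B i)) ->
    P (\bigcap_(i in `I_n) (X i @^-1` B i)) = (\prod_(i < n) P (X i @^-1` B i))%E.

Definition identically_distributed (P : probability T R) (n : nat)
    (X : nat -> T -> R) : Prop :=
  forall i, (i < n)%N -> forall B : set R, measurable B ->
    P (X i @^-1` B) = P (X 0%N @^-1` B).

Definition symmetric_rv (P : probability T R) (X : T -> R) : Prop :=
  forall B : set R, measurable B ->
    P (X @^-1` B) = P ((fun x => - X x) @^-1` B).

Definition cond_median (P : probability T R) (D : set T) (X : T -> R) (c : R)
    : Prop :=
  (P D <= 2%:E * P (D `&` [set x | (X x <= c)%R]))%E /\
  (P D <= 2%:E * P (D `&` [set x | (c <= X x)%R]))%E.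

Definition is_median (P : probability T R) (X : T -> R) (c : R) : Prop :=
  cond_median P setT X c.

End Defs.

Definition vwa_den {R : realType} (n : nat) (k : R -> R) (Y : nat -> R) (i : nat)
    : R :=
  \sum_(0 <= j < n | j != i) k (Y j - Y i).

Definition vwa {R : realType} (n : nat) (k : R -> R) (Y : nat -> R) (i : nat)
    : R :=
  (\sum_(0 <= j < n | j != i) Y j * k (Y j - Y i)) / vwa_den n k Y i.

(* Main.v *)
Require Import Defs.
From HB Require Import structures.
From mathcomp Require Import all_boot all_order all_algebra.
From mathcomp Require Import all_classical all_reals all_analysis.
From mathcomp Require Import ring lra.
Import Order.TTheory GRing.Theory Num.Theory.
Local Open Scope classical_set_scope.
Local Open Scope ring_scope.
Definition vec (R : realType) := nat -> R.
HB.instance Definition _ (R : realType) := Choice.on (vec R).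
HB.instance Definition _ (R : realType) := isPointed.Build (vec R) (fun _ => 0%R).
Definition rect (R : realType) (n:nat) : set (set (vec R)) :=
  [set A | exists B : nat -> set R, (forall i, measurable (B i)) /\
     A = [set f | forall i, (i < n)%N -> B i (f i)]].
Lemma pack_meas d (T : measurableType d) (R : realType) n (X : nat -> T -> R) :
  (0 < n)%N -> (forall i, (i < n)%N -> measurable_fun setT (X i)) ->
  measurable_fun setT ((fun x j => X j x) : T -> g_sigma_algebraType (rect R n)).
Proof.
move=> n0 mX; have := @measurability _ _ T (g_sigma_algebraType (rect R n)) setT (fun x j => X j x) (rect R n).
move=> /(_ erefl); apply.
move=> _ [_ [B [mB ->]] <-]; rewrite setTI.
have -> : ((fun x j => X j x) : T -> g_sigma_algebraType (rect R n)) @^-1`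
   [set f | forall i, (i < n)%N -> B i (f i)] = \bigcap_(i in `I_n) (X i @^-1` B i).
  by apply/seteqP; split => x /= H i /= Hi; apply: H.
apply: bigcap_measurable; first by exists 0%N.
move=> i /= Hi; rewrite -[X in measurable X]setTI; exact: mX.
Qed.

Lemma flip_eq d (T : measurableType d) (R : realType) (P : probability T R) n
  (eps : nat -> T -> R) :
  (0 < n)%N -> (forall i, (i < n)%N -> measurable_fun setT (eps i)) ->
  mutually_independent P n eps -> identically_distributed P n eps ->
  symmetric_rv P (eps 0%N) ->
  forall A : set (g_sigma_algebraType (rect R n)), measurable A ->
  P (((fun x j => eps j x) : T -> g_sigma_algebraType (rect R n)) @^-1` A) =
  P (((fun x j => - eps j x) : T -> g_sigma_algebraType (rect R n)) @^-1` A).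
Proof.
move=> n0 meps ind idd sym.
set V := ((fun x j => eps j x) : T -> g_sigma_algebraType (rect R n)).
set W := ((fun x j => - eps j x) : T -> g_sigma_algebraType (rect R n)).
have mV : measurable_fun setT V by exact: pack_meas.
have mW : measurable_fun setT W.
  apply: pack_meas => // i Hi; apply: measurableT_comp => //; exact: meps.
have mVp S : measurable S -> measurable (V @^-1` S).
  by move=> mS; rewrite -[X in measurable X]setTI; exact: mV.
have mWp S : measurable S -> measurable (W @^-1` S).
  by move=> mS; rewrite -[X in measurable X]setTI; exact: mW.
move=> A mA.
have := @dynkin_induction _ (g_sigma_algebraType (rect R n)) (rect R n)
  [set A | P (V @^-1` A) = P (W @^-1` A)] erefl.
move=> H; apply: H => //.
- move=> _ _ [B1 [mB1 ->]] [B2 [mB2 ->]].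
  exists (fun i => B1 i `&` B2 i); split.
    by move=> i; exact: measurableI.
  by apply/seteqP; split => f /=; [move=> [H1 H2] i Hi; split; [exact: H1|exact: H2]
     |move=> H; split => i Hi; have [] := H i Hi].
- move=> _ [B [mB ->]] /=.
  have mB' i : measurable (-%R @^-1` B i).
    by rewrite -[X in measurable X]setTI; exact: measurable_realfun.oppr_measurable.
  have -> : V @^-1` [set f | forall i, (i < n)%N -> B i (f i)] =
      \bigcap_(i in `I_n) (eps i @^-1` B i).
    by apply/seteqP; split => x /= H i /= Hi; apply: H.
  have -> : W @^-1` [set f | forall i, (i < n)%N -> B i (f i)] =
      \bigcap_(i in `I_n) (eps i @^-1` (-%R @^-1` B i)).
    by apply/seteqP; split => x /= H i /= Hi; apply: H.
  rewrite ind // ind //; apply: eq_bigr => i _.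
  rewrite idd // [in RHS]idd // sym //.
- move=> S mS /= HS; rewrite -!preimage_setC !probability_setC ?HS //; auto.
- move=> F mF tF HF /=; rewrite !preimage_bigcup.
  have tr (f : T -> g_sigma_algebraType (rect R n)) :
      trivIset setT (fun k => f @^-1` F k).
    move=> i j _ _ [x [Fi Fj]]; apply: tF => //; by exists (f x).
  have E1 := measure_bigcup P [set: nat] (fun k => V @^-1` F k) (fun i _ => mVp _ (mF i)) (tr V).
  have E2 := measure_bigcup P [set: nat] (fun k => W @^-1` F k) (fun i _ => mWp _ (mF i)) (tr W).
  rewrite /= in E1 E2; rewrite E1 E2.
  by apply: eq_eseriesr => i _; exact: HF.
Qed.

Lemma proj_meas (R : realType) n j : (j < n)%N ->
  measurable_fun setT (fun f : g_sigma_algebraType (rect R n) => f j).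
Proof.
move=> jn _ B mB; rewrite setTI; apply: sub_sigma_algebra.
exists (fun l => if l == j then B else setT); split.
  by move=> l; case: eqP.
apply/seteqP; split => f /=.
  by move=> Bf l ln; case: eqP => // ->.
by move=> H; have := H j jn; rewrite eqxx.
Qed.

Lemma sum_meas (R : realType) n i (F : nat -> g_sigma_algebraType (rect R n) -> R) :
  (forall j, (j < n)%N -> measurable_fun setT (F j)) ->
  measurable_fun setT (fun f => \sum_(0 <= j < n | j != i) F j f).
Proof.
move=> mF.
have -> : (fun f => \sum_(0 <= j < n | j != i) F j f) =
  (fun f => \sum_(j <- index_iota 0 n)
     (if (j < n)%N && (j != i) then F j else cst 0) f).
  apply/funext => f; rewrite big_mkcond /=; apply: eq_big_seq => j.
  rewrite mem_index_iota /= => ->; by case: (j != i).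
apply: measurable_sum => j; case: ifP => [/andP[jn _]|_]; first exact: mF.
exact: measurable_cst.
Qed.

Theorem theorem2 (d : measure_display) (T : measurableType d) (R : realType)
    (P : probability T R) (k : R -> R) (n : nat) (m : R)
    (eps : nat -> T -> R) :
  measurable_fun setT k ->
  (forall z, 0 <= k z) ->
  (forall z, k (- z) = k z) ->
  (2 <= n)%N ->
  (forall i, (i < n)%N -> measurable_fun setT (eps i)) ->
  mutually_independent P n eps ->
  identically_distributed P n eps ->
  symmetric_rv P (eps 0%N) ->
  (\int[P]_x ((eps 0%N x) ^+ 2)%:E < +oo)%E ->
  (\int[P]_x (k (eps 0%N x))%:E < +oo)%E ->
  (forall r : nat, (r = 1 \/ r = 2)%N ->
     (\int[P]_x (`|eps 0%N x| ^+ 2 * k (eps 0%N x) ^+ r)%:E < +oo)%E) ->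
  forall i : nat, (i < n)%N ->
    cond_median P
      [set x | 0 < vwa_den n k (fun j => m + eps j x) i]
      (fun x => vwa n k (fun j => m + eps j x) i) m.
Proof.
move=> mk k0 ksym n2 meps ind idd sym _ _ _ i ni.
have n0 : (0 < n)%N by apply: leq_trans n2.
pose V := ((fun x j => eps j x) : T -> g_sigma_algebraType (rect R n)).
pose W := ((fun x j => - eps j x) : T -> g_sigma_algebraType (rect R n)).
have mV : measurable_fun setT V by exact: pack_meas.
have mVp S : measurable S -> measurable (V @^-1` S).
  by move=> mS; rewrite -[X in measurable X]setTI; exact: mV.
pose den (f : g_sigma_algebraType (rect R n)) :=
  \sum_(0 <= j < n | j != i) k (f j - f i).
pose num (f : g_sigma_algebraType (rect R n)) :=
  \sum_(0 <= j < n | j != i) f j * k (f j - f i).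
have mden : measurable_fun setT den.
  apply: sum_meas => j jn; apply: measurableT_comp => //.
  by apply: measurable_realfun.measurable_funB; exact: proj_meas.
have mnum : measurable_fun setT num.
  apply: sum_meas => j jn; apply: measurable_realfun.measurable_funM; first exact: proj_meas.
  apply: measurableT_comp => //.
  by apply: measurable_realfun.measurable_funB; exact: proj_meas.
pose Ele := [set f | 0 < den f] `&` [set f | num f <= 0].
pose Ege := [set f | 0 < den f] `&` [set f | 0 <= num f].
have mpos : measurable [set f | 0 < den f].
  have -> : [set f | 0 < den f] = setT `&` den @^-1` `]0, +oo[.
    by rewrite setTI; apply/seteqP; split => f /=; rewrite in_itv /= ?andbT.
  by apply: mden => //; exact: measurable_itv.
have mle : measurable [set f | num f <= 0].
  have -> : [set f | num f <= 0] = setT `&` num @^-1` `]-oo, 0].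
    by rewrite setTI; apply/seteqP; split => f /=; rewrite in_itv /= ?andbT.
  by apply: mnum => //; exact: measurable_itv.
have mge : measurable [set f | 0 <= num f].
  have -> : [set f | 0 <= num f] = setT `&` num @^-1` `[0, +oo[.
    by rewrite setTI; apply/seteqP; split => f /=; rewrite in_itv /= ?andbT.
  by apply: mnum => //; exact: measurable_itv.
have mEle : measurable Ele by exact: measurableI.
have mEge : measurable Ege by exact: measurableI.
have denE x : vwa_den n k (fun j => m + eps j x) i = den (fun j => eps j x).
  by apply: eq_bigr => j _; congr k; rewrite /=; ring.
have numE x : \sum_(0 <= j < n | j != i) (m + eps j x) * k ((m + eps j x) - (m + eps i x))
    = m * den (fun j => eps j x) + num (fun j => eps j x).
  rewrite mulr_sumr -big_split /=; apply: eq_bigr => j _.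
  by rewrite /= (_ : m + eps j x - (m + eps i x) = eps j x - eps i x); [ring|ring].
have denW x : den (fun j => - eps j x) = den (fun j => eps j x).
  by apply: eq_bigr => j _; rewrite /W /V /= -ksym; congr k; ring.
have numW x : num (fun j => - eps j x) = - num (fun j => eps j x).
  rewrite /num -sumrN; apply: eq_bigr => j _; rewrite /W /V /=.
  by rewrite (_ : - eps j x - - eps i x = - (eps j x - eps i x)); [rewrite ksym; ring|ring].
set D := [set x | 0 < vwa_den n k (fun j => m + eps j x) i].
have E1 : D `&` [set x | vwa n k (fun j => m + eps j x) i <= m] = V @^-1` Ele.
  apply/seteqP; split => x; rewrite /D /Ele /preimage /= /vwa numE denE.
    by case=> dp; rewrite ler_pdivrMr // => H; split => //; lra.
  by case=> dp nle; split => //; rewrite ler_pdivrMr //; lra.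
have E2 : D `&` [set x | m <= vwa n k (fun j => m + eps j x) i] = V @^-1` Ege.
  apply/seteqP; split => x; rewrite /D /Ege /preimage /= /vwa numE denE.
    by case=> dp; rewrite ler_pdivlMr // => H; split => //; lra.
  by case=> dp nle; split => //; rewrite ler_pdivlMr //; lra.
have E3 : W @^-1` Ele = V @^-1` Ege.
  apply/seteqP; split => x; rewrite /Ele /Ege /preimage /= denW numW;
    by case=> a b; split => //; lra.
have Peq : P (V @^-1` Ele) = P (V @^-1` Ege).
  by rewrite -E3; apply: flip_eq.
have DU : D `<=` V @^-1` Ele `|` V @^-1` Ege.
  rewrite -E1 -E2 => x Dx.
  case: (lerP (vwa n k (fun j => m + eps j x) i) m) => H; [left|right] => //.
  by split => //; apply: ltW.
have mD : measurable D.
  have -> : D = V @^-1` [set f | 0 < den f].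
    by rewrite /D /preimage; apply/seteqP; split => x /=; rewrite denE.
  exact: mVp.
have key : (P D <= 2%:E * P (V @^-1` Ele))%E.
  rewrite mule_natl mule2n.
  apply: (le_trans (le_measure P _ _ DU)); rewrite ?inE //.
    by apply: measurableU; exact: mVp.
  by rewrite {2}Peq; apply: measureU2; exact: mVp.
rewrite /cond_median E1 E2 -Peq; split => //.
Qed.
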